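(* Let $E$ be a finite-dimensional real vector space with dual space $E^{*}$. An extended-real-valued function $h$ on $E$ is generalized affine if and only if there exist finite sequences (possibly of length zero) of vectors $\eta_1,\dots,\eta_j\in E^{*}$ and scalars $\delta_1,\dots,\delta_j$ such that $\eta_1,\dots,\eta_j$ are linearly independent and $h$ has the following form. Define $H_0=E$ and, for $0<i\le j$, $$H_i=\{x\in H_{i-1}:\langle x,\eta_i\rangle=\delta_i\},\quad C_i^{+}=\{x\in H_{i-1}:\langle x,\eta_i\rangle>\delta_i\},\quad C_i^{-}=\{x\in H_{i-1}:\langle x,\eta_i\rangle<\delta_i\},$$ all of these sets (if any) being nonempty. Then $h(x)=+\infty$ whenever $x\in C_i^{+}$ for some $i$, $h(x)=-\infty$ whenever $x\in C_i^{-}$ for some $i$, and $h$ restricted to $H_j$ is either affine or constant, where $+\infty$ and $-\infty$ are allowed as constant values.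
   Context: $\langle\cdot,\cdot\rangle$ is the canonical bilinear pairing of $E$ and $E^{*}$. A generalized affine function is a function $E\to\mathbb{R}\cup\{\pm\infty\}$ that is both convex and concave in the extended-real-valued sense. When $j=0$, the statement says $h$ is affine on $E$ or constant on $E$. *)

(* Defs.v *)
From HB Require Import structures.
From mathcomp Require Import all_boot all_order all_algebra.
From mathcomp Require Import reals constructive_ereal.
Set Implicit Arguments. Unset Strict Implicit. Unset Printing Implicit Defensive.
Import Order.TTheory GRing.Theory Num.Theory.
Local Open Scope ring_scope.
Local Open Scope ereal_scope.

(* E : vectType R is a finite-dimensional real vector space; its dual E^* is
   'Hom(E, R^o), and the pairing <x, eta> is the application eta x. *)

(* Convexity of an extended-real-valued function = convexity of its epigraph
   {(x, t) in E * R | f x <= t}, written out. *)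
Definition ext_convex (R : realType) (E : vectType R) (f : E -> \bar R) : Prop :=
  forall (x y : E) (s t l : R), (0 <= l <= 1)%R ->
    f x <= s%:E -> f y <= t%:E ->
    f (l *: x + (1 - l) *: y)%R <= (l * s + (1 - l) * t)%:E.

(* Concavity = convexity of the hypograph {(x, t) | t <= f x}
   (equivalently, convexity of -f). *)
Definition ext_concave (R : realType) (E : vectType R) (f : E -> \bar R) : Prop :=
  forall (x y : E) (s t l : R), (0 <= l <= 1)%R ->
    s%:E <= f x -> t%:E <= f y ->
    (l * s + (1 - l) * t)%:E <= f (l *: x + (1 - l) *: y)%R.

Definition generalized_affine (R : realType) (E : vectType R) (f : E -> \bar R) : Prop :=
  ext_convex f /\ ext_concave f.

Definition Hset (R : realType) (E : vectType R) (j : nat)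
  (eta : 'I_j -> 'Hom(E, R^o)) (delta : 'I_j -> R) (i : nat) (x : E) : Prop :=
  forall k : 'I_j, (k < i)%N -> eta k x = delta k.

(* C_i^+ = { x in H_(i-1) | <x, eta_i> > delta_i } with 0-based index i. *)
Definition Cplus (R : realType) (E : vectType R) (j : nat)
  (eta : 'I_j -> 'Hom(E, R^o)) (delta : 'I_j -> R) (i : 'I_j) (x : E) : Prop :=
  Hset eta delta i x /\ (delta i < eta i x)%R.

Definition Cminus (R : realType) (E : vectType R) (j : nat)
  (eta : 'I_j -> 'Hom(E, R^o)) (delta : 'I_j -> R) (i : 'I_j) (x : E) : Prop :=
  Hset eta delta i x /\ (eta i x < delta i)%R.

(* Main.v *)
Require Import Defs.
From HB Require Import structures.
From mathcomp Require Import all_boot all_order all_algebra.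
From mathcomp Require Import boolp classical_sets reals constructive_ereal.
From mathcomp Require Import ring lra zify.
Import Order.TTheory GRing.Theory Num.Theory.
Set Implicit Arguments. Unset Strict Implicit. Unset Printing Implicit Defensive.
Local Open Scope ring_scope.

Section OneD.
Variable R : realType.
Implicit Types (p m : R -> Prop) (a b c t : R).

Definition between a b c := (b < c <= a) \/ (a <= c < b).

Definition good1 p m :=
  [/\ (forall t, p t -> m t -> False),
      (forall a b c, p a -> ~ m b -> between a b c -> p c) &
      (forall a b c, m a -> ~ p b -> between a b c -> m c)].

Lemma good1_swap p m : good1 p m -> good1 m p.
Proof. by case=> H1 H2 H3; split=> // t /[swap] /H1. Qed.

Lemma ray_down p m t0 t1 t : good1 p m -> m t0 -> p t1 -> t0 < t1 -> t < t0 -> m t.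
Proof.
case=> D C3 C4 mt0 pt1 lt01 ltt; apply: contrapT => nmt.
apply: (D t0) => //; apply: (C3 t1 t) => //; rewrite /between; left.
by rewrite ltt ltW.
Qed.

Lemma ray_up p m t0 t1 t : good1 p m -> m t0 -> p t1 -> t0 < t1 -> t1 < t -> p t.
Proof.
case=> D C3 C4 mt0 pt1 lt01 ltt; apply: contrapT => npt.
apply: (D t1) => //; apply: (C4 t0 t) => //; rewrite /between; right.
by rewrite ltt ltW.
Qed.

Lemma ray_down' p m t0 t1 t : good1 p m -> p t0 -> m t1 -> t0 < t1 -> t < t0 -> p t.
Proof.
case=> D C3 C4 mt0 pt1 lt01 ltt; apply: contrapT => nmt.
apply: (D t0) => //; apply: (C4 t1 t) => //; rewrite /between; left.
by rewrite ltt ltW.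
Qed.

Lemma ray_up' p m t0 t1 t : good1 p m -> p t0 -> m t1 -> t0 < t1 -> t1 < t -> m t.
Proof.
case=> D C3 C4 mt0 pt1 lt01 ltt; apply: contrapT => npt.
apply: (D t1) => //; apply: (C3 t0 t) => //; rewrite /between; right.
by rewrite ltt ltW.
Qed.

Lemma gF1 p m s t0 : good1 p m -> ~ p s -> ~ m s -> m t0 -> p (s + (s - t0)).
Proof.
case=> D C3 C4 nps nms mt0; apply: contrapT => npw; apply: (nms).
apply: (C4 t0 (s + (s - t0))) => //; rewrite /between.
have [lt|gt|eq] := ltgtP t0 s.
- by right; apply/andP; split; lra.
- by left; apply/andP; split; lra.
- by exfalso; apply: nms; rewrite -eq.
Qed.

Definition crossUp p m := exists T1 T2, (forall t, t <= T1 -> m t) /\ (forall t, T2 <= t -> p t).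
Definition crossDn p m := exists T1 T2, (forall t, t <= T1 -> p t) /\ (forall t, T2 <= t -> m t).

Lemma line_class p m : good1 p m ->
  (forall t, p t) \/ (forall t, m t) \/ (forall t, ~ p t /\ ~ m t) \/ crossUp p m \/ crossDn p m.
Proof.
move=> G; have G' := good1_swap G; case: (G) => D _ _.
have [[t1 pt1]|np] := pselect (exists t, p t); have [[t0 mt0]|nm] := pselect (exists t, m t).
- case: (ltgtP t0 t1) => [lt|gt|eq].
  + right; right; right; left; exists t0, t1; split=> t Ht.
      by case: (ltgtP t t0) Ht => // [lt' _|-> _] //; apply: ray_down G mt0 pt1 lt lt'.
    by case: (ltgtP t1 t) Ht => // [lt' _|<- _] //; apply: ray_up G mt0 pt1 lt lt'.
  + right; right; right; right; exists t1, t0; split=> t Ht.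
      by case: (ltgtP t t1) Ht => // [lt' _|-> _] //; apply: ray_down' G pt1 mt0 gt lt'.
    by case: (ltgtP t0 t) Ht => // [lt' _|<- _] //; apply: ray_up' G pt1 mt0 gt lt'.
  + by subst; exfalso; apply: D pt1 mt0.
- left => t; apply: contrapT => npt.
  have nmt : ~ m t by move=> mt; apply: nm; exists t.
  by apply: nm; exists (t + (t - t1)); apply: (gF1 G') pt1.
- right; left => t; apply: contrapT => nmt.
  have npt : ~ p t by move=> pt; apply: np; exists t.
  by apply: np; exists (t + (t - t0)); apply: (gF1 G) mt0.
- by right; right; left => t; split=> H; [apply: np|apply: nm]; exists t.
Qed.

End OneD.

Section Vec.
Variables (R : realType) (E : vectType R).
Implicit Types (S P M : E -> Prop) (x y z u v : E) (a b c t l : R).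

Definition Saff S := forall x y z t, S x -> S y -> S z -> S (x + t *: (y - z)).
Definition Dir S u := forall y t, S y -> S (y + t *: u).
Definition goodS S P M := [/\ Saff S, (forall x, S x -> P x -> M x -> False),
  (forall x y l, S x -> S y -> 0 < l <= 1 -> P x -> ~ M y -> P (l *: x + (1 - l) *: y)) &
  (forall x y l, S x -> S y -> 0 < l <= 1 -> M x -> ~ P y -> M (l *: x + (1 - l) *: y))].

Lemma goodS_swap S P M : goodS S P M -> goodS S M P.
Proof. by case=> H0 H1 H2 H3; split=> // x Sx /[swap]; apply: H1. Qed.

Lemma cmbE x y l : l *: x + (1 - l) *: y = y + l *: (x - y).
Proof. by rewrite scalerBl scale1r scalerBr addrCA. Qed.

Lemma Saff_cmb S x y l : Saff S -> S x -> S y -> S (l *: x + (1 - l) *: y).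
Proof. by move=> H Sx Sy; rewrite cmbE; apply: H. Qed.

Lemma cmb_gen x y a b u l :
  l *: (x + a *: u) + (1 - l) *: (y + b *: u) =
  (l *: x + (1 - l) *: y) + (l * a + (1 - l) * b) *: u.
Proof. by rewrite [l *: (x + _)]scalerDr [(1 - l) *: (y + _)]scalerDr !scalerA [(l * a + _) *: u]scalerDl addrACA. Qed.

Lemma cmb_same y l : l *: y + (1 - l) *: y = y.
Proof. by rewrite -scalerDl addrC subrK scale1r. Qed.

Lemma between_cmb a b c : between a b c -> exists2 l, 0 < l <= 1 & c = l * a + (1 - l) * b.
Proof.
move=> H; have ab : a - b != 0.
  by apply/eqP => e; case: H => /andP[h1 h2]; lra.
have hl : (c - b) / (a - b) * (a - b) = c - b by field.
exists ((c - b) / (a - b)); last by field.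
move: hl; set l := (c - b) / (a - b) => hl.
by case: H => /andP[h1 h2]; apply/andP; split; nra.
Qed.

Lemma good_line S P M y u : goodS S P M -> S y -> Dir S u ->
  good1 (fun t => P (y + t *: u)) (fun t => M (y + t *: u)).
Proof.
case=> Sa D C3 C4 Sy Du; split.
- by move=> t; apply: D; apply: Du.
- move=> a b c pa nmb /between_cmb[l l01 ->].
  by rewrite -(cmb_same y l) -cmb_gen; apply: C3 => //; apply: Du.
- move=> a b c pa nmb /between_cmb[l l01 ->].
  by rewrite -(cmb_same y l) -cmb_gen; apply: C4 => //; apply: Du.
Qed.

Definition allQ P y u := forall t, P (y + t *: u).
Definition crossUpV P M y u := crossUp (fun t => P (y + t *: u)) (fun t => M (y + t *: u)).

Lemma half_mid x y a u :
  2^-1 *: (x + a *: u) + (1 - 2^-1) *: (y + (- a) *: u) = 2^-1 *: x + (1 - 2^-1) *: y.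
Proof.
rewrite cmb_gen; have -> : 2^-1 * a + (1 - 2^-1) * - a = 0 :> R by field.
by rewrite scale0r addr0.
Qed.

Lemma half01 : 0 < (2^-1 : R) <= 1.
Proof. by apply/andP; split; [rewrite invr_gt0 ltr0n | rewrite invf_le1 ?ler1n ?ltr0n]. Qed.

Lemma up_dn_false S P M y1 y2 u : goodS S P M -> Dir S u -> S y1 -> S y2 ->
  crossUpV P M y1 u -> crossDn (fun t => P (y2 + t *: u)) (fun t => M (y2 + t *: u)) -> False.
Proof.
case=> Sa D C3 C4 Du S1 S2 [T1 [T2 [HM1 HP1]]] [U1 [U2 [HP2 HM2]]].
pose a := Num.max T2 (- U1); pose b := Num.max U2 (- T1).
have Smid : S (2^-1 *: y1 + (1 - 2^-1) *: y2) by apply: Saff_cmb.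
apply: (D _ Smid).
- rewrite -(half_mid _ _ a u); apply: C3; rewrite ?half01 //; try exact: Du.
    by apply: HP1; rewrite le_max lexx.
  by move=> /(D _ (Du _ _ S2)); apply; apply: HP2; rewrite lerNl le_max lexx orbT.
- rewrite -(half_mid _ _ (- b) u) opprK; apply: C4; rewrite ?half01 //; try exact: Du.
    by apply: HM1; rewrite lerNl le_max lexx orbT.
  by move=> /(D _ (Du _ _ S2)) H; apply: H; apply: HM2; rewrite le_max lexx.
Qed.

Lemma up_F_false S P M y1 y2 u : goodS S P M -> Dir S u -> S y1 -> S y2 ->
  crossUpV P M y1 u -> (forall t, ~ P (y2 + t *: u) /\ ~ M (y2 + t *: u)) -> False.
Proof.
case=> Sa D C3 C4 Du S1 S2 [T1 [T2 [HM1 HP1]]] HF.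
have Smid : S (2^-1 *: y1 + (1 - 2^-1) *: y2) by apply: Saff_cmb.
apply: (D _ Smid).
- rewrite -(half_mid _ _ T2 u); apply: C3; rewrite ?half01 //; try exact: Du.
    by apply: HP1.
  by case: (HF (- T2)).
- rewrite -(half_mid _ _ T1 u); apply: C4; rewrite ?half01 //; try exact: Du.
    by apply: HM1.
  by case: (HF (- T1)).
Qed.

Lemma tri S P M m0 u : goodS S P M -> Dir S u -> S m0 -> crossUpV P M m0 u ->
  forall y, S y -> [\/ allQ P y u, allQ M y u | crossUpV P M y u].
Proof.
move=> G Du Sm cu y Sy.
have [H|[H|[H|[H|H]]]] := line_class (good_line G Sy Du).
- by apply: Or31.
- by apply: Or32.
- by exfalso; apply: up_F_false G Du Sm Sy cu H.
- by apply: Or33.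
- by exfalso; apply: up_dn_false G Du Sm Sy cu H.
Qed.

Lemma gF S P M s x : goodS S P M -> S s -> ~ P s -> ~ M s -> S x -> M x ->
  exists w, S w /\ P w.
Proof.
case=> Sa D C3 C4 Ss nps nms Sx Mx.
have Sw : S (s + 1 *: (s - x)) by apply: Sa.
exists (s + 1 *: (s - x)); split=> //; apply: contrapT => npw; apply: nms.
have -> : s = 2^-1 *: x + (1 - 2^-1) *: (s + 1 *: (s - x)).
  have -> : (1 - 2^-1 : R) = 2^-1 by field.
  rewrite scale1r -scalerDr addrCA [x + (s - x)]addrC subrK -mulr2n -scaler_nat.
  by rewrite scalerA mulVf ?scale1r // pnatr_eq0.
by apply: C4; rewrite ?half01.
Qed.

End Vec.

Lemma cross_of2 (R : realType) (p m : R -> Prop) t0 t1 : good1 p m -> m t0 -> p t1 -> t0 < t1 -> crossUp p m.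
Proof.
move=> G mt0 pt1 lt; exists t0, t1; split=> t Ht.
  by case: (ltgtP t t0) Ht => // [lt' _|-> _] //; apply: ray_down G mt0 pt1 lt lt'.
by case: (ltgtP t1 t) Ht => // [lt' _|<- _] //; apply: ray_up G mt0 pt1 lt lt'.
Qed.

Section Dom.
Variables (R : realType) (E : vectType R).
Implicit Types (S P M : E -> Prop) (x y z u v : E) (a b c t l : R).

Definition invW S P M (W : {vspace E}) := forall x w, S x -> w \in W ->
  (P (x + w) <-> P x) /\ (M (x + w) <-> M x).

Lemma inv_shift S (Q : E -> Prop) (W : {vspace E}) u : Dir S u ->
  (forall x w, S x -> w \in W -> (Q (x + w) <-> Q x)) ->
  forall x w, S x -> w \in (W + <[u]>)%VS -> (allQ Q (x + w) u <-> allQ Q x u).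
Proof.
move=> Du HQ x w Sx /memv_addP[w0 w0W [w1 /vlineP[s ->] ->]].
have eq t : x + (w0 + s *: u) + t *: u = (x + (s + t) *: u) + w0.
  by rewrite scalerDl !addrA [RHS]addrAC [x + s *: u + w0]addrAC.
split=> H t.
- have := H (t - s); rewrite eq addrCA subrr addr0.
  by move/(HQ _ _ (Du _ _ Sx) w0W).
- by rewrite eq; apply/(HQ _ _ (Du _ _ Sx) w0W).
Qed.

Lemma up_T2 S P M y u : goodS S P M -> Dir S u -> S y ->
  allQ P y u \/ crossUpV P M y u -> exists T2, forall t, T2 <= t -> P (y + t *: u).
Proof.
move=> _ _ _ [H|[T1 [T2 [_ H]]]]; last by exists T2.
by exists 0 => t _; apply: H.
Qed.

Lemma dom_step S P M (W : {vspace E}) p m : goodS S P M -> invW S P M W ->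
  S p -> P p -> S m -> M m ->
  (exists u, Dir S u /\ forall y, S y -> crossUpV P M y u) \/
  (exists u, [/\ u \notin W, Dir S u, goodS S (allQ P ^~ u) (allQ M ^~ u),
     invW S (allQ P ^~ u) (allQ M ^~ u) (W + <[u]>)%VS &
     (exists p', S p' /\ allQ P p' u) /\ (exists m', S m' /\ allQ M m' u)]).
Proof.
move=> G I Sp Pp Sm Mm; have G0 := G; case: G0 => Sa D C3 C4.
pose u := p - m.
have Du : Dir S u by move=> y t Sy; apply: Sa.
have mu : m + 1 *: u = p.
  by rewrite scale1r /u addrCA subrr addr0.
have cm : crossUpV P M m u.
  apply: (@cross_of2 _ _ _ 0 1 (good_line G Sm Du)).
  - by rewrite scale0r addr0.
  - by rewrite mu.
  - exact: ltr01.
have T := tri G Du Sm cm.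
have [Hall|Hn] := pselect (forall y, S y -> crossUpV P M y u).
  by left; exists u.
right; exists u.
have [y0 [Sy0 ny0]] : exists y0, S y0 /\ ~ crossUpV P M y0 u.
  apply: contrapT => H; apply: Hn => y Sy; apply: contrapT => ny.
  by apply: H; exists y.
have nmP : ~ allQ P m u by move=> /(_ 0); rewrite scale0r addr0 => /(D _ Sm); apply.
have nmM : ~ allQ M m u by move=> /(_ 1); rewrite mu => /(D _ Sp); apply.
have G' : goodS S (allQ P ^~ u) (allQ M ^~ u).
  split=> //.
  - by move=> x Sx /(_ 0) + /(_ 0); rewrite scale0r addr0; apply: D.
  - move=> x y l Sx Sy /andP[l0 l1] Px nMy t.
    have [T2 HT2] : exists T2, forall t, T2 <= t -> P (y + t *: u).
      apply: (up_T2 G Du Sy); case: (T y Sy) => [H|H|H]; by [left|exfalso|right].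
    have l0' : l != 0 by rewrite gt_eqF.
    have -> : (l *: x + (1 - l) *: y) + t *: u =
       l *: (x + ((t - (1 - l) * T2) / l) *: u) + (1 - l) *: (y + T2 *: u).
      by rewrite cmb_gen; congr (_ + _ *: _); field.
    apply: C3; rewrite ?l0 ?l1 //; try exact: Du.
    by move/(D _ (Du _ _ Sy)); apply; apply: HT2.
  - move=> x y l Sx Sy /andP[l0 l1] Mx nPy t.
    have [T1 HT1] : exists T1, forall t, t <= T1 -> M (y + t *: u).
      case: (T y Sy) => [H|H|[T1 [T2 [H _]]]]; first by exfalso.
        by exists 0 => t' _; apply: H.
      by exists T1.
    have l0' : l != 0 by rewrite gt_eqF.
    have -> : (l *: x + (1 - l) *: y) + t *: u =
       l *: (x + ((t - (1 - l) * T1) / l) *: u) + (1 - l) *: (y + T1 *: u).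
      by rewrite cmb_gen; congr (_ + _ *: _); field.
    apply: C4; rewrite ?l0 ?l1 //; try exact: Du.
    by move/(D _ (Du _ _ Sy)); apply; apply: HT1.
split=> //.
- apply/negP => uW; have [+ _] := I m u Sm uW.
  by rewrite -(scale1r u) mu => /iffLR /(_ Pp) /(D _ Sm); apply.
- move=> x w Sx wW.
  have hP : forall x' w', S x' -> w' \in W -> (P (x' + w') <-> P x').
    by move=> x' w' Sx' w'W; case: (I x' w' Sx' w'W).
  have hM : forall x' w', S x' -> w' \in W -> (M (x' + w') <-> M x').
    by move=> x' w' Sx' w'W; case: (I x' w' Sx' w'W).
  by split; [exact: (inv_shift Du hP Sx wW)|exact: (inv_shift Du hM Sx wW)].
- split.
  case: (T y0 Sy0) => [H|H|H]; [by exists y0| |by exfalso].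
  exact: (gF G' Sm nmP nmM Sy0 H).
  case: (T y0 Sy0) => [H|H|H]; [|by exists y0|by exfalso].
  exact: (gF (goodS_swap G') Sm nmM nmP Sy0 H).
Qed.

Lemma dom_ex S n : forall P M (W : {vspace E}), (\dim {:E} - \dim W <= n)%N ->
  goodS S P M -> invW S P M W -> (exists p, S p /\ P p) -> (exists m, S m /\ M m) ->
  exists u, Dir S u /\ forall y, S y -> crossUpV P M y u.
Proof.
elim: n => [|n IH] P M W hdim G I [p [Sp Pp]] [m [Sm Mm]];
  case: (dom_step G I Sp Pp Sm Mm) => [//|[u [uW Du G' I' [ex1 ex2]]]].
- have lt : (\dim W < \dim (W + <[u]>))%N.
    rewrite (ltn_leqif (dimv_leqif_sup (addvSl W <[u]>))).
    apply/negP => sub; apply/negP: uW; rewrite negbK.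
    exact: (subvP sub) _ (subvP (addvSr W <[u]>) _ (memv_line u)).
  have := dimvS (subvf (W + <[u]>)); lia.
- have lt : (\dim W < \dim (W + <[u]>))%N.
    rewrite (ltn_leqif (dimv_leqif_sup (addvSl W <[u]>))).
    apply/negP => sub; apply/negP: uW; rewrite negbK.
    exact: (subvP sub) _ (subvP (addvSr W <[u]>) _ (memv_line u)).
  have hd : (\dim {:E} - \dim (W + <[u]>) <= n)%N by lia.
  have [u' [Du' H]] := IH _ _ _ hd G' I' ex1 ex2.
  exists u'; split=> // y Sy; have [T1 [T2 [H1 H2]]] := H y Sy.
  exists T1, T2; split=> t Ht.
    by have := H1 t Ht 0; rewrite scale0r addr0.
  by have := H2 t Ht 0; rewrite scale0r addr0.
Qed.

End Dom.

Section Aff.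
Variables (R : realType) (E : vectType R).
Implicit Types (S P M : E -> Prop) (x y z u v d : E) (a b c t l : R).

Lemma mkhom (phi : E -> R^o) :
  (forall a x y, phi (a *: x + y) = a * phi x + phi y) ->
  exists g : 'Hom(E, R^o), forall x, g x = phi x.
Proof.
move=> H.
have lin : linear phi by move=> a x y; rewrite H.
pose L : {linear E -> R^o} := HB.pack phi (GRing.isLinear.Build _ _ _ _ phi lin).
by exists (linfun L) => x; rewrite lfunE.
Qed.

Lemma half01w : 0 <= (2^-1 : R) <= 1.
Proof. by case/andP: (half01 R) => h1 h2; rewrite ltW. Qed.

Lemma affine_ext S (D : {vspace E}) o (f : E -> R) :
  S o -> (forall x, S x <-> x - o \in D) ->
  (forall x y l, S x -> S y -> 0 <= l <= 1 -> f (l *: x + (1 - l) *: y) = l * f x + (1 - l) * f y) ->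
  exists (g : 'Hom(E, R^o)) (c : R), forall x, S x -> f x = g x + c.
Proof.
move=> So SD Hf.
pose psi d := f (o + d) - f o.
have SoD d : d \in D -> S (o + d) by move=> dD; apply/SD; rewrite addrC addKr.
have D0 : (0 : E) \in D by rewrite mem0v.
have ps01 l d : d \in D -> 0 <= l <= 1 -> psi (l *: d) = l * psi d.
  move=> dD l01; rewrite /psi.
  have -> : o + l *: d = l *: (o + d) + (1 - l) *: o by rewrite cmbE [o + d]addrC addrK.
  by rewrite Hf //; [ring | exact: SoD].
have psN d : d \in D -> psi (- d) = - psi d.
  move=> dD; have So' : S o by [].
  have := Hf (o + 1 *: d) (o + (- 1) *: d) 2^-1.
  rewrite half_mid cmb_same scale1r scaleN1r => H.
  rewrite /psi H //; first by field.
  - by apply: SoD.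
  - by apply: SoD; rewrite memvN.
  - exact: half01w.
have psP l d : d \in D -> 0 <= l -> psi (l *: d) = l * psi d.
  move=> dD l0; have [l1|l1] := leP l 1; first by apply: ps01; rewrite ?l0.
  have lD : l *: d \in D by rewrite memvZ.
  have lnz : l != 0 by apply/eqP; lra.
  have il : 0 <= l^-1 <= 1 by rewrite invr_ge0 l0 /= invf_le1 ?ltW //; lra.
  have := ps01 l^-1 _ lD il; rewrite scalerA mulVf // scale1r => H.
  by rewrite H; field.
have psZ l d : d \in D -> psi (l *: d) = l * psi d.
  move=> dD; have [l0|l0] := leP 0 l; first exact: psP.
  by rewrite -[l]opprK scaleNr psN ?memvZ // psP //; [ring | lra].
have psD d1 d2 : d1 \in D -> d2 \in D -> psi (d1 + d2) = psi d1 + psi d2.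
  move=> d1D d2D.
  have dD : d1 + d2 \in D by rewrite memvD.
  have := psZ 2^-1 _ dD; rewrite /psi.
  have -> : o + 2^-1 *: (d1 + d2) = 2^-1 *: (o + d1) + (1 - 2^-1) *: (o + d2).
    have -> : (1 - 2^-1 : R) = 2^-1 by field.
    by rewrite -scalerDr addrACA -mulr2n -scaler_nat [in RHS]scalerDr scalerA mulVf ?pnatr_eq0 // scale1r.
  rewrite Hf ?half01w //; try exact: SoD.
  move=> H; apply: (mulfI (_ : (2^-1 : R) != 0)); first by rewrite invr_eq0 pnatr_eq0.
  by rewrite -H; field.
pose phi x := psi (projv D x).
have [g Hg] : exists g : 'Hom(E, R^o), forall x, g x = phi x.
  apply: mkhom => a x y; rewrite /phi.
  by rewrite linearP /= psD ?memvZ ?memv_proj // psZ // memv_proj.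
exists g, (f o - g o) => x Sx.
have xD : x - o \in D by apply/SD.
have := Hg (x - o); rewrite /phi projv_id // /psi [o + (x - o)]addrC subrK raddfB /=.
move=> H; have -> : f x = (f x - f o) + f o by ring.
by rewrite -H; ring.
Qed.

End Aff.

Section Theta.
Variables (R : realType) (E : vectType R).
Implicit Types (S P M : E -> Prop) (x y z u v d : E) (a b c t l : R).

Lemma Pconv S P M x y l : goodS S P M -> S x -> S y -> 0 <= l <= 1 -> P x -> P y ->
  P (l *: x + (1 - l) *: y).
Proof.
case=> Sa D C3 C4 Sx Sy /andP[l0 l1] Px Py.
have [->|ln0] := eqVneq l 0; first by rewrite scale0r add0r subr0 scale1r.
apply: C3 => //; first by rewrite l1 andbT lt_def ln0.
by apply: D.
Qed.

Lemma Mconv S P M x y l : goodS S P M -> S x -> S y -> 0 <= l <= 1 -> M x -> M y ->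
  M (l *: x + (1 - l) *: y).
Proof. by move/goodS_swap; apply: Pconv. Qed.

Lemma theta_sep S P M u o (D : {vspace E}) : goodS S P M -> Dir S u ->
  (forall y, S y -> crossUpV P M y u) -> S o -> (forall x, S x <-> x - o \in D) ->
  exists (g : 'Hom(E, R^o)) (c : R), [/\ g (o + u) != g o,
    (forall x, S x -> 0 < g x + c -> P x) & (forall x, S x -> g x + c < 0 -> M x)].
Proof.
move=> G Du Hc So SD; have G0 := G; case: G0 => Sa Dj C3 C4.
pose B y : set R := fun t => M (y + t *: u).
pose th y := sup (B y).
have bnd y t : S y -> B y t -> forall T2, (forall t, T2 <= t -> P (y + t *: u)) -> t < T2.
  move=> Sy Bt T2 HT2; rewrite ltNge; apply/negP => le.
  by apply: (Dj _ (Du _ _ Sy)) (HT2 _ le) Bt.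
have hs y : S y -> has_sup (B y).
  move=> Sy; have [T1 [T2 [H1 H2]]] := Hc y Sy; split; first by exists T1; apply: H1.
  by exists T2 => t Bt; apply: ltW; apply: bnd Sy Bt T2 H2.
have th1 y t : S y -> t < th y -> M (y + t *: u).
  move=> Sy lt; have [T1 [T2 [H1 H2]]] := Hc y Sy.
  have pos : 0 < th y - t by rewrite subr_gt0.
  have [e Be lte] := sup_adherent pos (hs y Sy).
  rewrite opprB addrCA subrr addr0 in lte.
  have eT : e < T2 by apply: bnd Sy Be T2 H2.
  by apply: (ray_down (good_line G Sy Du) Be (H2 _ (lexx T2)) eT lte).
have th2 y t : S y -> th y < t -> P (y + t *: u).
  move=> Sy lt; have [T1 [T2 [H1 H2]]] := Hc y Sy.
  have nM : ~ M (y + t *: u).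
    by move=> Mt; have := sup_upper_bound (hs y Sy) Mt; rewrite leNgt lt.
  apply: contrapT => nP.
  have T1th : T1 <= th y := sup_upper_bound (hs y Sy) (H1 _ (lexx T1)).
  have [_ _ C4'] := good_line G Sy Du.
  have Mc : M (y + ((th y + t) / 2) *: u).
    apply: (C4' T1 t) => //; first exact: H1.
    by right; apply/andP; split; lra.
  have := sup_upper_bound (hs y Sy) Mc; rewrite -/(th y); lra.
have thc y a : S y -> (forall t, t < a -> M (y + t *: u)) ->
    (forall t, a < t -> P (y + t *: u)) -> th y = a.
  move=> Sy Ha1 Ha2; apply/eqP; rewrite eq_le; apply/andP; split.
    rewrite leNgt; apply/negP => lt.
    have h1 : a < (a + th y) / 2 by lra.
    have h2 : (a + th y) / 2 < th y by lra.
    by apply: (Dj _ (Du _ _ Sy)) (Ha2 _ h1) (th1 _ _ Sy h2).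
  rewrite leNgt; apply/negP => lt.
  have h1 : th y < (a + th y) / 2 by lra.
  have h2 : (a + th y) / 2 < a by lra.
  by apply: (Dj _ (Du _ _ Sy)) (th2 _ _ Sy h1) (Ha1 _ h2).
have thaff x y l : S x -> S y -> 0 <= l <= 1 ->
    th (l *: x + (1 - l) *: y) = l * th x + (1 - l) * th y.
  move=> Sx Sy l01; apply: thc; first exact: Saff_cmb.
  - move=> t lt; pose e := l * th x + (1 - l) * th y - t.
    have -> : l *: x + (1 - l) *: y + t *: u =
        l *: (x + (th x - e) *: u) + (1 - l) *: (y + (th y - e) *: u).
      by rewrite cmb_gen /e; congr (_ + _ *: _); ring.
    by apply: (Mconv G) => //; try apply: Du => //; apply: th1 => //; rewrite /e; lra.
  - move=> t lt; pose e := t - (l * th x + (1 - l) * th y).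
    have -> : l *: x + (1 - l) *: y + t *: u =
        l *: (x + (th x + e) *: u) + (1 - l) *: (y + (th y + e) *: u).
      by rewrite cmb_gen /e; congr (_ + _ *: _); ring.
    by apply: (Pconv G) => //; try apply: Du => //; apply: th2 => //; rewrite /e; lra.
have thsh y s : S y -> th (y + s *: u) = th y - s.
  move=> Sy; apply: thc; first exact: Du.
  - move=> t lt; rewrite -addrA -scalerDl; apply: th1 => //; lra.
  - move=> t lt; rewrite -addrA -scalerDl; apply: th2 => //; lra.
have thaff' : forall x y l, S x -> S y -> 0 <= l <= 1 ->
    - th (l *: x + (1 - l) *: y) = l * - th x + (1 - l) * - th y.
  by move=> x y l Sx Sy l01; rewrite thaff //; ring.
have [g [c Hgc]] := affine_ext (f := fun x => - th x) So SD thaff'.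
exists g, c; split.
- have Sou : S (o + u) by rewrite -(scale1r u); apply: Du.
  have h1 := Hgc _ Sou; have h2 := Hgc _ So.
  have h3 : th (o + u) = th o - 1 by rewrite -{1}(scale1r u) thsh.
  apply/eqP => e; rewrite h3 e in h1; lra.
- move=> x Sx; rewrite -Hgc // => lt.
  by have := th2 x 0 Sx; rewrite scale0r addr0; apply; lra.
- move=> x Sx; rewrite -Hgc // => lt.
  by have := th1 x 0 Sx; rewrite scale0r addr0; apply; lra.
Qed.

End Theta.

Section Hlev.
Variables (R : realType) (E : vectType R).
Implicit Types (S P M : E -> Prop) (x y z u v : E) (a b c t l : R).

Definition HN (f : nat -> 'Hom(E, R^o)) (d : nat -> R) (i : nat) (x : E) : Prop :=
  forall k, (k < i)%N -> f k x = d k.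

Lemma lfun_cmb (g : 'Hom(E, R^o)) x y t : g (x + t *: y) = g x + t * g y.
Proof. by rewrite linearD linearZ. Qed.

Lemma HN_aff f d k : Saff (HN f d k).
Proof.
move=> x y z t Hx Hy Hz i lt; rewrite lfun_cmb linearB /= Hx // Hy // Hz //.
by rewrite subrr mulr0 addr0.
Qed.

Lemma HN_D f d k o : HN f d k o ->
  forall x, HN f d k x <-> x - o \in (\bigcap_(i < k) lker (f i))%VS.
Proof.
move=> Ho x; rewrite memvE; split.
- move=> Hx; apply/subv_bigcapP => i _; rewrite -memvE memv_ker linearB /=.
  by rewrite Hx // Ho // subrr.
- move/subv_bigcapP => H i lt; have := H (Ordinal lt) isT.
  by rewrite -memvE memv_ker linearB /= subr_eq0 Ho // => /eqP.
Qed.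

Local Open Scope ereal_scope.

Lemma good_h (h : E -> \bar R) S : generalized_affine h -> Saff S ->
  goodS S (fun x => h x = +oo) (fun x => h x = -oo).
Proof.
case=> Hcv Hcc Sa; split=> //.
- by move=> x _ ->.
- move=> x y l Sx Sy /andP[l0 l1] Px nMy.
  have [t0 Ht0] : exists t0 : R, t0%:E <= h y.
    by case: (h y) nMy => [r||] // _; [exists r | exists 0%R; rewrite leey].
  case Hz: (h _) => [r||] //.
  + have := Hcc x y ((r + 1 - (1 - l) * t0) / l)%R t0 l.
    rewrite Px leey Ht0 Hz lee_fin (ltW l0) l1 => /(_ isT isT isT).
    have -> : (l * ((r + 1 - (1 - l) * t0) / l) + (1 - l) * t0 = r + 1)%R.
      by field; rewrite gt_eqF.
    by move=> H; exfalso; move: H; apply/negP; rewrite -ltNge; lra.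
  + have := Hcc x y 0%R t0 l.
    by rewrite Px leey Ht0 Hz (ltW l0) l1 => /(_ isT isT isT); rewrite leeNy_eq.
- move=> x y l Sx Sy /andP[l0 l1] Mx nPy.
  have [t0 Ht0] : exists t0 : R, h y <= t0%:E.
    by case: (h y) nPy => [r||] // _; [exists r | exists 0%R; rewrite leNye].
  case Hz: (h _) => [r||] //.
  + have := Hcv x y ((r - 1 - (1 - l) * t0) / l)%R t0 l.
    rewrite Mx leNye Ht0 Hz lee_fin (ltW l0) l1 => /(_ isT isT isT).
    have -> : (l * ((r - 1 - (1 - l) * t0) / l) + (1 - l) * t0 = r - 1)%R.
      by field; rewrite gt_eqF.
    by move=> H; exfalso; move: H; apply/negP; rewrite -ltNge; lra.
  + have := Hcv x y 0%R t0 l.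
    by rewrite Mx leNye Ht0 Hz (ltW l0) l1 => /(_ isT isT isT); rewrite leye_eq.
Qed.


Definition terminal (h : E -> \bar R) (S : E -> Prop) :=
  (exists (g : 'Hom(E, R^o)) (c : R), forall x, S x -> h x = (g x + c)%:E) \/
  (exists c : \bar R, forall x, S x -> h x = c).

Lemma finite_affine (h : E -> \bar R) S o (D : {vspace E}) : generalized_affine h ->
  S o -> (forall x, S x <-> (x - o)%R \in D) -> Saff S ->
  (forall x, S x -> h x <> +oo /\ h x <> -oo) ->
  exists (g : 'Hom(E, R^o)) (c : R), forall x, S x -> h x = (g x + c)%:E.
Proof.
case=> Hcv Hcc So SD Sa Hfin.
have hE x : S x -> h x = (fine (h x))%:E.
  by move=> Sx; case: (Hfin x Sx); case: (h x).
have Haff : forall x y l, S x -> S y -> (0 <= l <= 1)%R ->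
    fine (h (l *: x + (1 - l) *: y)%R) = (l * fine (h x) + (1 - l) * fine (h y))%R.
  move=> x y l Sx Sy l01; have Sz := Saff_cmb l Sa Sx Sy.
  have h1 := Hcv x y (fine (h x)) (fine (h y)) l l01.
  have h2 := Hcc x y (fine (h x)) (fine (h y)) l l01.
  rewrite -!hE // in h1 h2; have := h1 (lexx _) (lexx _); have := h2 (lexx _) (lexx _).
  rewrite (hE _ Sz) !lee_fin => a b; apply/eqP; rewrite eq_le; apply/andP; split=> //.
have [g [c Hgc]] := affine_ext (f := fun x => fine (h x)) So SD Haff.
by exists g, c => x Sx; rewrite hE // Hgc.
Qed.

Lemma step (h : E -> \bar R) f d k : generalized_affine h -> (exists o, HN f d k o) ->
  terminal h (HN f d k) \/
  exists (eta : 'Hom(E, R^o)) (del : R),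
    [/\ exists x y, [/\ HN f d k x, HN f d k y & eta x != eta y],
        (forall x, HN f d k x -> (del < eta x)%R -> h x = +oo) &
        (forall x, HN f d k x -> (eta x < del)%R -> h x = -oo)].
Proof.
move=> Hga [o So].
pose S := HN f d k; pose P x := h x = +oo; pose M x := h x = -oo.
have Sa : Saff S := @HN_aff f d k.
have G : goodS S P M := good_h Hga Sa.
have SD := HN_D So.
have [[p [Sp Pp]]|nP] := pselect (exists p, S p /\ P p);
  have [[m [Sm Mm]]|nM] := pselect (exists m, S m /\ M m).
- right.
  have I : invW S P M 0%VS.
    by move=> x w Sx; rewrite memv0 => /eqP ->; rewrite addr0.
  have [u [Du Hc]] := dom_ex (n := \dim {:E}) (leq_subr _ _) G I
     (ex_intro _ p (conj Sp Pp)) (ex_intro _ m (conj Sm Mm)).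
  have [g [c [gne H1 H2]]] := theta_sep G Du Hc So SD.
  exists g, (- c)%R; split.
  + exists (o + u)%R, o; split=> //; rewrite -(scale1r u); exact: Du.
  + by move=> x Sx lt; apply: H1 => //; rewrite -subr_gt0 opprK in lt.
  + by move=> x Sx lt; apply: H2 => //; rewrite -subr_lt0 opprK in lt.
- left; right; exists +oo => x Sx; apply: contrapT => nPx.
  have nMx : ~ M x by move=> Mx; apply: nM; exists x.
  have [w [Sw Mw]] := gF (goodS_swap G) Sx nMx nPx Sp Pp.
  by apply: nM; exists w.
- left; right; exists -oo => x Sx; apply: contrapT => nMx.
  have nPx : ~ P x by move=> Px; apply: nP; exists x.
  have [w [Sw Pw]] := gF G Sx nPx nMx Sm Mm.
  by apply: nP; exists w.
- left; left; apply: (finite_affine Hga So SD Sa) => x Sx.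
  by split=> H; [apply: nP|apply: nM]; exists x.
Qed.

End Hlev.

Lemma mkhomV (R : realType) (V : vectType R) (phi : V -> R^o) :
  (forall a x y, phi (a *: x + y) = a * phi x + phi y) ->
  exists g : 'Hom(V, R^o), forall x, g x = phi x.
Proof.
move=> H.
have lin : linear phi by move=> a x y; rewrite H.
pose L : {linear V -> R^o} := HB.pack phi (GRing.isLinear.Build _ _ _ _ phi lin).
by exists (linfun L) => x; rewrite lfunE.
Qed.

Section Loop.
Variables (R : realType) (E : vectType R) (h : E -> \bar R).
Implicit Types (x y z u v : E) (a b c t l : R).

Definition Inv k (f : nat -> 'Hom(E, R^o)) (d : nat -> R) :=
  [/\ free [seq f i | i <- iota 0 k],
      (forall i, (i <= k)%N -> exists x, HN f d i x),
      (forall i, (i < k)%N -> (exists x, HN f d i x /\ d i < f i x) /\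
                            (exists x, HN f d i x /\ f i x < d i)),
      (forall i x, (i < k)%N -> HN f d i x -> d i < f i x -> h x = +oo%E) &
      (forall i x, (i < k)%N -> HN f d i x -> f i x < d i -> h x = -oo%E)].

Lemma free_size (V : vectType R) (s : seq V) : free s -> (size s <= \dim {:V})%N.
Proof. by move/eqP <-; apply: dimvS; apply: subvf. Qed.

Lemma extend k f d (eta : 'Hom(E, R^o)) del : Inv k f d ->
  (exists x y, [/\ HN f d k x, HN f d k y & eta x != eta y]) ->
  (forall x, HN f d k x -> del < eta x -> h x = +oo%E) ->
  (forall x, HN f d k x -> eta x < del -> h x = -oo%E) ->
  Inv k.+1 (fun i => if i == k then eta else f i) (fun i => if i == k then del else d i).
Proof.
move=> [Hfree Hne Hpm Hp Hm] [x0 [y0 [Sx0 Sy0 ne]]] Hd1 Hd2.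
set f' := fun i => _; set d' := fun i => _.
have HNe i x : (i <= k)%N -> HN f' d' i x <-> HN f d i x.
  move=> ik; split=> H j ji; have := H j ji;
  by rewrite /f' /d' ifF // ltn_eqF // (leq_trans ji ik).
have HNk x : HN f' d' k.+1 x <-> HN f d k x /\ eta x = del.
  split.
  - move=> H; split; first by apply/(HNe k x (leqnn k)) => j jk; apply: H; exact: ltnW.
    by have := H k (ltnSn k); rewrite /f' /d' eqxx.
  - case=> H1 H2 j; rewrite ltnS leq_eqVlt => /orP[/eqP ->|jk].
      by rewrite /f' /d' eqxx.
    by move: j jk; apply/(HNe k x (leqnn k)).
have hit (r : R) : exists x, HN f d k x /\ eta x = r.
  exists (x0 + ((r - eta x0) / (eta y0 - eta x0)) *: (y0 - x0)); split.
    by apply: HN_aff.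
  by rewrite lfun_cmb linearB /=; field; rewrite subr_eq0 eq_sym.
have Hnot : eta \notin <<[seq f i | i <- iota 0 k]>>%VS.
  apply/negP => Hin.
  have [L HL] : exists L : 'Hom('Hom(E, R^o), R^o), forall g, L g = g (y0 - x0).
    by apply: mkhomV => a g1 g2; rewrite add_lfunE scale_lfunE.
  have sub : (<<[seq f i | i <- iota 0 k]>> <= lker L)%VS.
    apply/span_subvP => g /mapP[i]; rewrite mem_iota add0n => /andP[_ ik] ->.
    by rewrite memv_ker HL linearB /= Sx0 // Sy0 // subrr.
  have := subvP sub _ Hin; rewrite memv_ker HL linearB /= subr_eq0.
  by rewrite eq_sym (negPf ne).
split.
- have -> : [seq f' i | i <- iota 0 k.+1] = rcons [seq f i | i <- iota 0 k] eta.
    rewrite -addn1 iotaD map_cat add0n /= cats1 /f' eqxx; congr rcons.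
    by apply/eq_in_map => i; rewrite mem_iota add0n => /andP[_ ik]; rewrite ltn_eqF.
  have pe : perm_eq (rcons [seq f i | i <- iota 0 k] eta) (eta :: [seq f i | i <- iota 0 k]).
    by rewrite perm_rcons perm_refl.
  by rewrite (perm_free pe) free_cons Hnot Hfree.
- move=> i; rewrite leq_eqVlt => /orP[/eqP ->|ik].
    by have [x [Sx ex]] := hit del; exists x; apply/HNk.
  by have [x Hx] := Hne i ik; exists x; apply/HNe.
- move=> i; rewrite ltnS leq_eqVlt => /orP[/eqP ->|ik].
    have [x [Sx ex]] := hit (del + 1); have [y [Sy ey]] := hit (del - 1).
    split; [exists x|exists y]; rewrite /f' /d' eqxx; split;
      rewrite ?(HNe _ _ (leqnn k)) ?ex ?ey //; lra.
  have [[x [Sx ex]] [y [Sy ey]]] := Hpm i ik.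
  split; [exists x|exists y]; rewrite /f' /d' ltn_eqF // (HNe _ _ (ltnW ik)); split=> //.
- move=> i x; rewrite ltnS leq_eqVlt => /orP[/eqP ->|ik].
    by rewrite /f' /d' eqxx (HNe _ _ (leqnn k)); apply: Hd1.
  by rewrite /f' /d' ltn_eqF // (HNe _ _ (ltnW ik)); apply: Hp.
- move=> i x; rewrite ltnS leq_eqVlt => /orP[/eqP ->|ik].
    by rewrite /f' /d' eqxx (HNe _ _ (leqnn k)); apply: Hd2.
  by rewrite /f' /d' ltn_eqF // (HNe _ _ (ltnW ik)); apply: Hm.
Qed.

Lemma loop n : generalized_affine h -> forall k f d, Inv k f d ->
  (\dim {:'Hom(E, R^o)} - k <= n)%N ->
  exists k f d, Inv k f d /\ terminal h (HN f d k).
Proof.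
move=> Hga; elim: n => [|n IH] k f d I hdim; have [_ Hne _ _ _] := I;
  (have [T|[eta [del [ne Hd1 Hd2]]]] := step Hga (Hne k (leqnn k));
   first by exists k, f, d); have I' := extend I ne Hd1 Hd2; have [Hf' _ _ _ _] := I'.
- exfalso; have := free_size Hf'; rewrite size_map size_iota => H; move: hdim; rewrite leqn0 subn_eq0 leqNgt H //=.
- apply: IH I' _; have := free_size Hf'; rewrite size_map size_iota; lia.
Qed.

End Loop.

Section Back.
Variables (R : realType) (E : vectType R).
Implicit Types (x y z u v : E) (a b c t l : R).

Lemma lfun_cmb2 (g : 'Hom(E, R^o)) x y l :
  g (l *: x + (1 - l) *: y) = l * g x + (1 - l) * g y.
Proof. by rewrite linearD !linearZ. Qed.

Lemma level (h : E -> \bar R) f d j x :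
  (forall n x, (n < j)%N -> HN f d n x -> d n < f n x -> h x = +oo%E) ->
  h x <> +oo%E ->
  exists n, [/\ (n <= j)%N, HN f d n x & ((n < j)%N -> f n x < d n)].
Proof.
move=> Hp hx.
have [[n0 Hn0]|nn] := pselect (exists n, (n < j)%N && (f n x != d n)).
  pose Pn := fun n => (n < j)%N && (f n x != d n).
  have exn : exists n, Pn n by exists n0.
  case: (ex_minnP exn) => n /andP[nj ne] Hmin.
  have below k : (k < n)%N -> f k x = d k.
    move=> kn; apply/eqP; apply: contrapT => /negP nek.
    have := Hmin k; rewrite /Pn nek (ltn_trans kn nj) /= => /(_ isT).
    by rewrite leqNgt kn.
  exists n; split=> //; first exact: ltnW.
  move=> _; rewrite lt_def eq_sym ne /=; rewrite leNgt; apply/negP => lt.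
  by apply: hx; apply: Hp lt.
exists j; split=> //; last by rewrite ltnn.
move=> k kj; apply/eqP; apply: contrapT => /negP nek; apply: nn.
by exists k; rewrite kj.
Qed.

Local Open Scope ereal_scope.

Lemma conv_back (h : E -> \bar R) f d j :
  (forall n x, (n < j)%N -> HN f d n x -> (d n < f n x)%R -> h x = +oo) ->
  (forall n x, (n < j)%N -> HN f d n x -> (f n x < d n)%R -> h x = -oo) ->
  terminal h (HN f d j) -> ext_convex h.
Proof.
move=> Hp Hm Ht x y s t l l01 hx hy.
have [->|l0] := eqVneq l 0%R.
  by rewrite scale0r add0r subr0 scale1r mul0r add0r mul1r.
have [->|l1] := eqVneq l 1%R.
  by rewrite subrr scale0r addr0 scale1r mul0r addr0 mul1r.
have lb : (0 < l < 1)%R.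
  by case/andP: l01 => a b; rewrite !lt_def l0 eq_sym l1 a b.
have nPx : h x <> +oo by move=> e; rewrite e leye_eq in hx.
have nPy : h y <> +oo by move=> e; rewrite e leye_eq in hy.
have [nx [nxj Hx Hxl]] := level Hp nPx.
have [ny [nyj Hy Hyl]] := level Hp nPy.
have [/andP[/eqP ex /eqP ey]|nee] := boolP ((nx == j) && (ny == j)).
  subst nx ny.
  have Sz : HN f d j (l *: x + (1 - l) *: y)%R by apply: (Saff_cmb l (@HN_aff _ _ f d j) Hx Hy).
  case: Ht => [[g [c Hgc]]|[c Hc]].
    rewrite Hgc // lfun_cmb2; rewrite Hgc // lee_fin in hx; rewrite Hgc // lee_fin in hy.
    by rewrite lee_fin; case/andP: lb => ? ?; nra.
  rewrite Hc //; rewrite Hc // in hx; rewrite Hc // in hy.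
  case: c hx hy {Hc} => [r| |] hx hy; [|by rewrite leye_eq in hx|by rewrite leNye].
  by move: hx hy; rewrite !lee_fin => ? ?; case/andP: lb => ? ?; nra.
pose m := minn nx ny.
have mj : (m < j)%N.
  move: nee; rewrite negb_and /m => /orP[] ne; [have : (nx < j)%N by rewrite ltn_neqAle ne nxj|
    have : (ny < j)%N by rewrite ltn_neqAle ne nyj]; lia.
have fxm : (f m x <= d m)%R.
  have [mx|mx] := ltnP m nx; first by rewrite Hx.
  have e : m = nx by apply/eqP; rewrite eqn_leq mx geq_minl.
  by rewrite e; apply/ltW/Hxl; rewrite -e.
have fym : (f m y <= d m)%R.
  have [my|my] := ltnP m ny; first by rewrite Hy.
  have e : m = ny by apply/eqP; rewrite eqn_leq my geq_minr.
  by rewrite e; apply/ltW/Hyl; rewrite -e.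
have strict : (f m x < d m)%R \/ (f m y < d m)%R.
  case: (leqP nx ny) => c; [left|right].
    have e : m = nx by rewrite /m (minn_idPl c).
    by rewrite e; apply: Hxl; rewrite -e.
  have e : m = ny by rewrite /m (minn_idPr (ltnW c)).
  by rewrite e; apply: Hyl; rewrite -e.
rewrite (Hm m) ?leNye //.
  move=> k km; rewrite lfun_cmb2 Hx ?Hy; first by ring.
    exact: (leq_trans km (geq_minr _ _)).
  exact: (leq_trans km (geq_minl _ _)).
rewrite lfun_cmb2; case/andP: lb => ? ?; case: strict => ?; nra.
Qed.

Lemma concave_of_neg (h : E -> \bar R) : ext_convex (fun x => - h x) -> ext_concave h.
Proof.
move=> H x y s t l l01 hx hy.
have := H x y (- s)%R (- t)%R l l01; rewrite !EFinN !leeN2 => /(_ hx hy).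
have -> : (l * - s + (1 - l) * - t = - (l * s + (1 - l) * t))%R by ring.
by rewrite EFinN leeN2.
Qed.

Lemma back_ga (h : E -> \bar R) f d j :
  (forall n x, (n < j)%N -> HN f d n x -> (d n < f n x)%R -> h x = +oo) ->
  (forall n x, (n < j)%N -> HN f d n x -> (f n x < d n)%R -> h x = -oo) ->
  terminal h (HN f d j) -> generalized_affine h.
Proof.
move=> Hp Hm Ht; split; first exact: conv_back Hp Hm Ht.
apply: concave_of_neg.
pose f' n := (- f n)%R; pose d' n := (- d n)%R.
have HNE i x : HN f' d' i x <-> HN f d i x.
  split=> H k ki; have := H k ki; rewrite /f' /d' opp_lfunE; [exact: oppr_inj| by move=> ->].
apply: (@conv_back _ f' d' j).
- move=> n x nj /HNE Hx; rewrite /f' /d' opp_lfunE ltrN2 => lt.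
  by rewrite (Hm n x).
- move=> n x nj /HNE Hx; rewrite /f' /d' opp_lfunE ltrN2 => lt.
  by rewrite (Hp n x).
- case: Ht => [[g [c Hgc]]|[c Hc]].
    left; exists (- g)%R, (- c)%R => x /HNE Sx.
    by rewrite Hgc // opp_lfunE -EFinN opprD.
  by right; exists (- c) => x /HNE Sx; rewrite Hc.
Qed.

End Back.

Unset Implicit Arguments.
Local Open Scope ereal_scope.

Lemma HsetE (R : realType) (E : vectType R) (f : nat -> 'Hom(E, R^o)) (d : nat -> R) j i x :
  (i <= j)%N -> Hset (fun k : 'I_j => f k) (fun k : 'I_j => d k) i x <-> HN f d i x.
Proof.
move=> ij; split=> H.
- by move=> k ki; have := H (Ordinal (leq_trans ki ij)) ki.
- by move=> k ki; apply: H.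
Qed.

Theorem theorem5 (R : realType) (E : vectType R) (h : E -> \bar R) :
  generalized_affine h <->
  exists (j : nat) (eta : 'I_j -> 'Hom(E, R^o)) (delta : 'I_j -> R),
    [/\ free [seq eta i | i <- enum 'I_j],
        [/\ (forall i : nat, (i <= j)%N -> exists x, Hset eta delta i x),
            (forall i : 'I_j, exists x, Cplus eta delta i x) &
            (forall i : 'I_j, exists x, Cminus eta delta i x)],
        (forall (i : 'I_j) (x : E), Cplus eta delta i x -> h x = +oo),
        (forall (i : 'I_j) (x : E), Cminus eta delta i x -> h x = -oo) &
        ((exists (g : 'Hom(E, R^o)) (c : R),
            forall x, Hset eta delta j x -> h x = (g x + c)%:E) \/
         (exists c : \bar R, forall x, Hset eta delta j x -> h x = c))].
Proof.
split.
- move=> Hga.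
  have I0 : Inv h 0 (fun _ => 0%R) (fun _ => 0%R).
    split=> //; first exact: nil_free.
    by move=> i; rewrite leqn0 => /eqP ->; exists 0%R.
  have [k [f [d [[Hfree Hne Hpm Hp Hm] T]]]] :=
    loop (n := \dim {:'Hom(E, R^o)}) Hga I0 (leq_subr _ _).
  exists k, (fun i : 'I_k => f i), (fun i : 'I_k => d i); split.
  + have -> : [seq (fun i : 'I_k => f i) i | i <- enum 'I_k] = [seq f i | i <- iota 0 k].
      by rewrite -val_enum_ord -map_comp.
    exact: Hfree.
  + split.
    * by move=> i ik; have [x Hx] := Hne i ik; exists x; apply/(HsetE _ _ _ _ _ _ _ ik).
    * move=> i; have [[x [Hx lt]] _] := Hpm i (ltn_ord i).
      by exists x; split=> //; apply/(HsetE _ _ _ _ _ _ _ (ltnW (ltn_ord i))).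
    * move=> i; have [_ [x [Hx lt]]] := Hpm i (ltn_ord i).
      by exists x; split=> //; apply/(HsetE _ _ _ _ _ _ _ (ltnW (ltn_ord i))).
  + move=> i x [Hx lt]; by apply: (Hp i) => //; apply/(HsetE _ _ _ _ _ _ _ (ltnW (ltn_ord i))).
  + move=> i x [Hx lt]; by apply: (Hm i) => //; apply/(HsetE _ _ _ _ _ _ _ (ltnW (ltn_ord i))).
  + case: T => [[g [c Hgc]]|[c Hc]]; [left; exists g, c|right; exists c] => x Hx;
      [apply: Hgc|apply: Hc]; exact/(HsetE _ _ _ _ _ _ _ (leqnn k)).
- move=> [j [eta [delta [_ _ Hp Hm Ht]]]].
  pose f (n : nat) : 'Hom(E, R^o) := if insub n is Some i then eta i else 0%R.
  pose d (n : nat) : R := if insub n is Some i then delta i else 0%R.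
  have fE (i : 'I_j) : f i = eta i by rewrite /f valK.
  have dE (i : 'I_j) : d i = delta i by rewrite /d valK.
  have HsE i x : (i <= j)%N -> Hset eta delta i x <-> HN f d i x.
    move=> ij; split=> H.
    - move=> k ki; have kj := leq_trans ki ij.
      by rewrite (fE (Ordinal kj)) (dE (Ordinal kj)); apply: H.
    - by move=> k ki; rewrite -fE -dE; apply: H.
  apply: (@back_ga _ _ h f d j).
  + move=> n x nj Hx lt; apply: (Hp (Ordinal nj)); split.
      by apply/HsE => //; apply: ltnW.
    by rewrite -fE -dE.
  + move=> n x nj Hx lt; apply: (Hm (Ordinal nj)); split.
      by apply/HsE => //; apply: ltnW.
    by rewrite -fE -dE.
  + case: Ht => [[g [c Hgc]]|[c Hc]]; [left; exists g, c|right; exists c] => x Hx;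
      [apply: Hgc|apply: Hc]; exact/(HsE _ _ (leqnn j)).
Qed.
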